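(* Let $P$ be a simplicial polyhedron of genus zero. Then the lattice graph of $P$ contains a facet cycle.
   Context: A simplicial polyhedron is a polyhedron in $\mathbb{R}^3$ all of whose faces (facets) are triangles. The lattice graph $G$ of $P$ has one node for each facet, each edge and each vertex of $P$, with an arc for each incidence between these faces. A facet path in $G$ is a path that alternates between vertex nodes and facet nodes, includes each facet exactly once, and never repeats the same vertex twice in a row; thus in a subpath $(\ldots, v_1, f, v_2, \ldots)$, $v_1$ and $v_2$ are distinct vertices of the facet $f$. A facet cycle is a facet path that is also a cycle (closed). *)

(* Defs.v *)
(* Combinatorial model of a simplicial polyhedron of genus 0:
   a triangulated 2-sphere given by its vertex type T and its set of facets. *)
From mathcomp Require Import all_boot.
Set Implicit Arguments. Unset Strict Implicit. Unset Printing Implicit Defensive.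

Section Sphere.
Variable T : finType.
Variable F : {set {set T}}.

Definition edges : {set {set T}} :=
  [set e : {set T} | (#|e| == 2) && [exists f in F, e \subset f]].

Definition link_rel (v : T) : rel T := fun a b => [set v; a; b] \in F.

Definition facet_adj : rel {set T} :=
  fun f g => [&& f \in F, g \in F & #|f :&: g| == 2].

Definition simplicial_sphere : Prop :=
  [/\
      (forall f, f \in F -> #|f| = 3) /\ (forall v : T, exists2 f, f \in F & v \in f),
      (* closed surface: every edge lies in exactly two facets *)
      forall e, e \in edges -> #|[set f in F | e \subset f]| = 2,
      (* manifold: the link of every vertex is connected (hence a single cycle) *)
      forall v a b, v != a -> v != b -> [set v; a] \in edges -> [set v; b] \in edges ->
        connect (link_rel v) a b,
      forall f g, f \in F -> g \in F -> connect facet_adj f g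
    & (* genus zero: Euler characteristic V - E + F = 2 *)
      #|T| + #|F| = #|edges| + 2].

(* A facet cycle in the lattice graph: v_0, f_1, v_1, f_2, ..., f_n, v_0, encoded
   as the cyclic sequence of pairs (v_{i-1}, f_i); consecutive vertices v_{i-1}, v_i
   are distinct vertices of f_i, and every facet occurs exactly once. *)
Definition fc_rel : rel (T * {set T}) :=
  fun x y => [&& x.1 \in x.2, y.1 \in x.2 & x.1 != y.1].

Definition has_facet_cycle : Prop :=
  exists s : seq (T * {set T}),
    cycle fc_rel s /\ perm_eq (map snd s) (enum F).

End Sphere.

(* Main.v *)
Require Import Defs.
From mathcomp Require Import all_boot zify.
From Stdlib Require Import Classical.
Set Implicit Arguments. Unset Strict Implicit. Unset Printing Implicit Defensive.

Section Proofs.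
Variables (T : finType) (F : {set {set T}}).
Hypothesis tri : forall f, f \in F -> #|f| = 3.
Hypothesis edge2 : forall e, e \in edges F -> #|[set f in F | e \subset f]| = 2.
Hypothesis conn : forall f g, f \in F -> g \in F -> connect (facet_adj F) f g.

Notation pt := (T * {set T})%type.
Notation fcr := (@fc_rel T).

Lemma third h a b : h \in F -> a \in h -> b \in h -> a != b ->
  exists z, [/\ z \in h, z != a, z != b &
     forall x, x \in h -> [|| x == a, x == b | x == z]].
Proof.
move=> hF ah bh ab.
have := tri hF; rewrite (cardsD1 a) ah (cardsD1 b (h :\ a)) !inE eq_sym ab bh /=.
move/eqP; rewrite !add1n !eqSS => /cards1P [z hz].
have : z \in h :\ a :\ b by rewrite hz set11.
rewrite !inE => /and3P [zb za zh].
exists z; split => // x xh.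
case: (x =P a) => // /eqP xa; case: (x =P b) => //= /eqP xb.
have : x \in h :\ a :\ b by rewrite !inE xa xb xh.
by rewrite hz inE => ->.
Qed.

Lemma eq_facet h m : h \in F -> m \in F -> h \subset m -> h = m.
Proof. by move=> hF mF hm; apply/eqP; rewrite eqEcard hm (tri hF) (tri mF). Qed.

Lemma edge_other h a b : h \in F -> a \in h -> b \in h -> a != b ->
  exists x, [set f in F | [set a; b] \subset f] :\ h = [set x].
Proof.
move=> hF ah bh ab.
have ee : [set a; b] \in edges F.
  rewrite inE cards2 ab /=; apply/existsP; exists h; rewrite hF /=.
  by apply/subsetP => x; rewrite !inE => /orP [] /eqP ->.
have := edge2 ee; rewrite (cardsD1 h) inE hF /=.
have -> : [set a; b] \subset h by apply/subsetP => x; rewrite !inE => /orP [] /eqP ->.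
by move/eqP; rewrite add1n eqSS => /cards1P.
Qed.

Lemma other_uniq h a b k1 k2 : h \in F -> a \in h -> b \in h -> a != b ->
  k1 \in F -> k2 \in F -> k1 != h -> k2 != h ->
  a \in k1 -> b \in k1 -> a \in k2 -> b \in k2 -> k1 = k2.
Proof.
move=> hF ah bh ab k1F k2F k1h k2h ak1 bk1 ak2 bk2.
have [x hx] := edge_other hF ah bh ab.
have sub (k : {set T}) : a \in k -> b \in k -> [set a; b] \subset k.
  by move=> ak bk; apply/subsetP => y; rewrite !inE => /orP [] /eqP ->.
have : k1 \in [set x] by rewrite -hx !inE k1h k1F sub.
have : k2 \in [set x] by rewrite -hx !inE k2h k2F sub.
by rewrite !inE => /eqP -> /eqP ->.
Qed.

Lemma other_ex h a b : h \in F -> a \in h -> b \in h -> a != b ->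
  exists k, [/\ k \in F, k != h, a \in k & b \in k].
Proof.
move=> hF ah bh ab.
have [x hx] := edge_other hF ah bh ab.
have : x \in [set x] by rewrite set11.
rewrite -hx !inE => /and3P [xh xF /subsetP sx].
by exists x; split => //; apply: sx; rewrite !inE eqxx ?orbT.
Qed.

Definition valid (s : seq pt) :=
  [&& cycle fcr s, uniq (map snd s) & all (fun x => x.2 \in F) s].
Definition maxv s := valid s /\ forall s', valid s' -> size s' <= size s.
Definition isStep (s : seq pt) c h d := ((c, h) \in s) && ((next s (c, h)).1 == d).
Definition Pb s h k := [exists c, exists d,
  [&& isStep s c h d, k \in F, k != h, c \in k & d \in k]].

Lemma PbP s h k : reflect (exists c d, [/\ isStep s c h d, k \in F, k != h, c \in k & d \in k]) (Pb s h k).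
Proof.
apply: (iffP existsP) => [[c /existsP [d /and5P [? ? ? ? ?]]] | [c [d [? ? ? ? ?]]]].
  by exists c, d.
by exists c; apply/existsP; exists d; apply/and5P.
Qed.

Lemma pair_uniq (s : seq pt) x y : uniq (map snd s) -> x \in s -> y \in s -> x.2 = y.2 -> x = y.
Proof.
elim: s => //= z s IH /andP [zn u]; rewrite !inE.
case/orP => [/eqP -> | xs]; case/orP => [/eqP -> | ys] e //.
- by move: zn; rewrite e (map_f snd ys).
- by move: zn; rewrite -e (map_f snd xs).
- exact: IH.
Qed.

Lemma valid_uniq s : valid s -> uniq s.
Proof. by case/and3P => _ /map_uniq. Qed.

Lemma step_props s c h d : valid s -> isStep s c h d -> [/\ h \in F, c \in h, d \in h & c != d].
Proof.
case/and3P => cy u al /andP [m /eqP <-].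
have := next_cycle cy m; rewrite /fc_rel /= => /and3P [? ? ?].
by split => //; apply: (allP al _ m).
Qed.

Lemma step_uniq s c h d c' d' : valid s -> isStep s c h d -> isStep s c' h d' -> c = c' /\ d = d'.
Proof.
case/and3P => _ u _ /andP [m1 /eqP <-] /andP [m2 /eqP <-].
have E : (c, h) = (c', h) := pair_uniq u m1 m2 erefl.
by case: E => ->.
Qed.

Lemma Pb_S s h k : Pb s h k -> h \in map snd s.
Proof. by case/PbP => c [d [/andP [m _] _ _ _ _]]; apply: (map_f snd m). Qed.

Lemma Pb_fun s h k k' : valid s -> Pb s h k -> Pb s h k' -> k = k'.
Proof.
move=> vs /PbP [c [d [st kF kh ck dk]]] /PbP [c' [d' [st' kF' kh' ck' dk']]].
have [? ?] := step_uniq vs st st'; subst c' d'.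
have [hF ch dh cd] := step_props vs st.
exact: (other_uniq hF ch dh cd kF kF' kh kh').
Qed.

Lemma step_ex s h : h \in map snd s -> exists c d, isStep s c h d.
Proof.
case/mapP => [[c h'] m /= ->]; exists c, (next s (c, h')).1.
by rewrite /isStep m eqxx.
Qed.

Lemma cycle3 (x y : pt) u :
  cycle fcr [:: x, y & u] = [&& fcr x y, path fcr y u & fcr (last y u) x].
Proof. by rewrite /cycle /= rcons_path. Qed.

Lemma fc_tgt (x y y' : pt) : y.1 = y'.1 -> fcr x y = fcr x y'.
Proof. by rewrite /fc_rel => ->. Qed.

Lemma valid_rot i s : valid (rot i s) = valid s.
Proof.
rewrite /valid rot_cycle map_rot rot_uniq; congr [&& _, _ & _].
by apply/allP/allP => H x m; apply: H; rewrite ?mem_rot in m *.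
Qed.

Lemma isStep_rot i s : uniq s -> forall c h d, isStep (rot i s) c h d = isStep s c h d.
Proof. by move=> u c h d; rewrite /isStep mem_rot next_rot. Qed.

Lemma step_rot s a h b : valid s -> isStep s a h b ->
  exists i y u, rot i s = [:: (a, h), y & u] /\ y.1 = b.
Proof.
move=> vs st; have u := valid_uniq vs.
case/andP: (st) => m /eqP <-.
case: (rot_to m) => i [|y u'] E.
  have : valid (rot i s) by rewrite valid_rot.
  by rewrite E /valid /= /fc_rel eqxx !andbF.
exists i, y, u'; split => //.
by rewrite -(next_rot i u) E /= eqxx.
Qed.


Lemma mem_snd_rot i (s : seq pt) h : (h \in map snd (rot i s)) = (h \in map snd s).
Proof. by rewrite map_rot mem_rot. Qed.


Lemma valid_dec (x y : pt) u : valid [:: x, y & u] ->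
  [/\ fcr x y, path fcr y u, fcr (last y u) x,
      x.2 \notin y.2 :: map snd u & uniq (y.2 :: map snd u) /\ (x.2 \in F /\ all (fun x => x.2 \in F) (y :: u))].
Proof. by case/and3P; rewrite cycle3 => /and3P [? ? ?] /andP [? ?] /andP [? ?]. Qed.

Lemma valid_3 (x y : pt) u : fcr x y -> path fcr y u -> fcr (last y u) x ->
  x.2 \notin y.2 :: map snd u -> uniq (y.2 :: map snd u) -> x.2 \in F ->
  all (fun x => x.2 \in F) (y :: u) -> valid [:: x, y & u].
Proof.
move=> r1 r2 r3 n1 un f1 al.
rewrite /valid cycle3 r1 r2 r3.
rewrite map_cons cons_uniq n1 un /=.
by apply/andP; split.
Qed.

Lemma valid_4 (x1 x2 y : pt) u : fcr x1 x2 -> fcr x2 y -> path fcr y u -> fcr (last y u) x1 ->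
  x1.2 \notin x2.2 :: y.2 :: map snd u -> x2.2 \notin y.2 :: map snd u ->
  uniq (y.2 :: map snd u) -> x1.2 \in F -> x2.2 \in F ->
  all (fun x => x.2 \in F) (y :: u) -> valid [:: x1, x2, y & u].
Proof.
move=> r1 r2 r3 r4 n1 n2 un f1 f2 al.
rewrite /valid /cycle rcons_path (lock last) /= r1 r2 r3 -lock r4.
move: un al => /= /andP [-> ->] /andP [-> ->].
by rewrite n1 n2 f1 f2.
Qed.

Lemma fc_tgtE (x : pt) a h h' : fcr x (a, h) = fcr x (a, h').
Proof. by []. Qed.

Lemma insA s a h b z k : maxv s -> isStep s a h b -> z \in h -> z != a -> z != b ->
  k \in F -> z \in k -> (a \in k) || (b \in k) -> k \in map snd s.
Proof.
move=> [vs mx] st zh za zb kF zk abk.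
apply/negPn/negP => kn.
have [hF ah bh ab] := step_props vs st.
have [i [y [u [E yb]]]] := step_rot vs st.
have vr : valid (rot i s) by rewrite valid_rot.
have sz : size (rot i s) = (size u).+2 by rewrite E.
rewrite size_rot in sz.
rewrite -(mem_snd_rot i) E map_cons in_cons negb_or in kn.
case/andP: kn => kh kn.
rewrite E in vr; case/valid_dec: vr => r1 r2 r3 hn [un [_ al]].
case/orP: abk => [ak | bk].
- have v2 : valid [:: (a, k), (z, h), y & u].
    apply: valid_4 => //.
    + by rewrite /fc_rel ak zk eq_sym za.
    + by rewrite /fc_rel zh yb bh zb.
    + have H : k \notin [:: h, y.2 & map snd u] by rewrite in_cons negb_or kh.
      exact: H.
  by have := mx _ v2; rewrite sz ltnn.
- have v2 : valid [:: (a, h), (z, k), y & u].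
    apply: valid_4 => //.
    + by rewrite /fc_rel ah zh eq_sym za.
    + by rewrite /fc_rel zk yb bk zb.
    + have H : h \notin [:: k, y.2 & map snd u] by rewrite in_cons negb_or eq_sym kh.
      exact: H.
  by have := mx _ v2; rewrite sz ltnn.
Qed.

Lemma next_at_fst (w : seq pt) z y0 y0' y : y0.1 = y0'.1 ->
  (next_at z y0 y w).1 = (next_at z y0' y w).1.
Proof.
move=> e; elim: w y => [|y1 w IH] y.
  by rewrite /next_at; case: (z == y).
by rewrite [next_at _ _ _ (_ :: _)]/next_at -/next_at [next_at _ _ _ (_ :: _)]/next_at -/next_at; case: (z == y).
Qed.
Lemma next_head_fst (w : seq pt) x x' z : x.1 = x'.1 -> z != x -> z != x' ->
  (next (x :: w) z).1 = (next (x' :: w) z).1.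
Proof.
move=> e zx zx'; rewrite /next.
case: w => [|y1 w].
  by rewrite /next_at (negbTE zx) (negbTE zx').
rewrite [next_at _ _ _ (_ :: _)]/next_at -/next_at [next_at _ _ _ (_ :: _)]/next_at -/next_at.
rewrite (negbTE zx) (negbTE zx'). exact: next_at_fst.
Qed.
Lemma next_head (x y : pt) u : next [:: x, y & u] x = y.
Proof. by rewrite /next /next_at eqxx. Qed.

Lemma mem_swapL (h f g : {set T}) (l : seq {set T}) : f \notin l ->
  (h \in g :: l) = (h == g) || ((h != f) && (h \in f :: l)).
Proof.
move=> fn; rewrite !in_cons; case: (h =P f) => [->|/eqP hf].
  by rewrite (negbTE fn); case: (f == g).
by case: (h == g); case: (h \in l).
Qed.

Lemma swap s a f b g : maxv s -> isStep s a f b -> g \in F -> g \notin map snd s ->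
  a \in g -> b \in g ->
  exists s', [/\ maxv s', isStep s' a g b,
    (forall h, (h \in map snd s') = (h == g) || ((h != f) && (h \in map snd s))) &
    (forall c h d, h != f -> h != g -> isStep s' c h d = isStep s c h d)].
Proof.
move=> [vs mx] st gF gn ag bg.
have [fF af bf ab] := step_props vs st.
have [i [y [u [E yb]]]] := step_rot vs st.
have vr : valid (rot i s) by rewrite valid_rot.
have us := valid_uniq vs.
have sz : size (rot i s) = (size u).+2 by rewrite E.
rewrite size_rot in sz.
rewrite -(mem_snd_rot i) E in gn.
have vr' := vr; rewrite E in vr'; case/valid_dec: vr' => r1 r2 r3 fn [un [_ al]].
rewrite map_cons in_cons negb_or in gn; case/andP: gn => gf gn.
exists [:: (a, g), y & u]; split.
- split.
    apply: valid_3 => //.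
    + by rewrite /fc_rel ag yb bg ab.
  by move=> s' /mx; rewrite sz.
- by rewrite /isStep mem_head next_head yb eqxx.
- move=> h.
  rewrite -[h \in map snd s](mem_snd_rot i) E.
  change ((h \in g :: map snd (y :: u)) = (h == g) || ((h != f) && (h \in f :: map snd (y :: u)))).
  exact: mem_swapL.
- move=> c h d hf hg.
  rewrite -(isStep_rot i us) E /isStep !in_cons !xpair_eqE (negbTE hf) (negbTE hg) !andbF !orFb.
  rewrite (@next_head_fst [:: y & u] (a, g) (a, f) (c, h)) //.
  + by rewrite xpair_eqE (negbTE hg) andbF.
  + by rewrite xpair_eqE (negbTE hf) andbF.
Qed.


Lemma Pb_transfer s s' f g :
  (forall c h d, h != f -> h != g -> isStep s' c h d = isStep s c h d) ->
  forall h k, h != f -> h != g -> Pb s' h k = Pb s h k.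
Proof.
move=> H h k hf hg; apply: eq_existsb => c; apply: eq_existsb => d.
by rewrite H.
Qed.

Fixpoint chain s n h g : Prop :=
  if n is n'.+1 then exists f, chain s n' h f /\ Pb s f g else h = g.

Lemma chain_front s n h g : chain s n.+1 h g -> exists y, Pb s h y /\ chain s n y g.
Proof.
elim: n g => [|n IH] g.
  by case=> f [-> P]; exists g.
case=> f [cf P]; have [y [Py cy]] := IH f cf.
by exists y; split => //; exists f.
Qed.

Lemma chain_path s h p : path (Pb s) h p -> chain s (size p) h (last h p).
Proof.
elim/last_ind: p => [|p x IH] //.
rewrite rcons_path size_rcons last_rcons => /andP [pp e].
by exists (last h p); split => //; apply: IH.
Qed.

Lemma chain_S s n h g : chain s n.+1 h g -> h \in map snd s.
Proof. by case/chain_front => y [/Pb_S]. Qed.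

Lemma chain_transfer s s' f g n h x : valid s -> Pb s f g -> g \notin map snd s ->
  (forall y k, y != f -> y != g -> Pb s' y k = Pb s y k) ->
  chain s n h x -> x != g -> chain s' n h x.
Proof.
move=> vs Pfg gn Ht; elim: n x => [|n IH] x //.
case=> y [cy Pyx] xg.
have yg : y != g by apply/eqP => e; move: gn; rewrite -e (Pb_S Pyx).
exists y; split; first exact: IH.
rewrite Ht //; apply/eqP => yf; subst y.
by move/eqP: xg; apply; apply: Pb_fun vs Pyx Pfg.
Qed.

Lemma case_adj (h m : {set T}) a b z x y :
  (forall v, v \in h -> [|| v == a, v == b | v == z]) ->
  x != y -> x \in m -> y \in m -> x \in h -> y \in h ->
  ((a \in m) && (b \in m)) || ((z \in m) && ((a \in m) || (b \in m))).
Proof.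
move=> H xy xm ym xh yh.
case/or3P: (H x xh) => /eqP ex; case/or3P: (H y yh) => /eqP ey; subst x y;
  try by rewrite eqxx in xy.
all: move: xm ym; case: (a \in m); case: (b \in m); case: (z \in m) => //.
Qed.

Lemma key n : forall s g h, maxv s -> g \in F -> g \notin map snd s -> chain s n.+1 h g ->
  forall m, m \in F -> m != h ->
  (exists x y, [/\ x != y, x \in m, y \in m, x \in h & y \in h]) ->
  ~~ Pb s h m -> (m \in map snd s) && Pb s m h.
Proof.
elim: n => [|n IH] s g h ms gF gn ch m mF mh [x [y [xy xm ym xh yh]]] nP.
- case: ch => f [hf Pfg]; subst f.
  case/PbP: (Pfg) => a [b [st _ gh ag bg]].
  have vs := ms.1.
  have [hF ah bh ab] := step_props vs st.
  have [z [zh za zb hz]] := third hF ah bh ab.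
  have mS : m \in map snd s.
    case/orP: (case_adj hz xy xm ym xh yh) => [/andP [am bm] | /andP [zm abm]].
      have : Pb s h m by apply/PbP; exists a, b; split.
      by rewrite (negbTE nP).
    exact: insA ms st zh za zb mF zm abm.
  have [s' [ms' st' memS' stT]] := swap ms st gF gn ag bg.
  have mg : m != g by apply/eqP => e; move: gn; rewrite -e mS.
  have mS' : m \in map snd s' by rewrite memS' mh mS orbT.
  have [c [d st2]] := step_ex mS'.
  have [_ cm dm cd] := step_props ms'.1 st2.
  have [z' [z'm z'c z'd hz']] := third mF cm dm cd.
  rewrite mS andTb.
  case/orP: (case_adj hz' xy xh yh xm ym) => [/andP [ch dh] | /andP [z'h cdh]].
    have : Pb s' m h by apply/PbP; exists c, d; split => //; rewrite eq_sym.
    by rewrite (Pb_transfer stT).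
  have := insA ms' st2 z'm z'c z'd hF z'h cdh.
  have hS : h \in map snd s by apply: Pb_S Pfg.
  have hg : h != g by apply/eqP => e; move: gn; rewrite -e hS.
  by rewrite memS' (negbTE hg) eqxx.
- case: ch => f [ch0 Pfg].
  have ch : chain s n.+1 h f := ch0.
  case/PbP: (Pfg) => a [b [st _ gf ag bg]].
  have vs := ms.1.
  have fS : f \in map snd s := Pb_S Pfg.
  have [fF af bf ab] := step_props vs st.
  have [s' [ms' st' memS' stT]] := swap ms st gF gn ag bg.
  have PT := Pb_transfer stT.
  have fg : f != g by apply/eqP => e; move: gn; rewrite -e fS.
  have hS : h \in map snd s := chain_S ch.
  have hg : h != g by apply/eqP => e; move: gn; rewrite -e hS.
  have hf : h != f.
    apply/eqP => e; subst h.
    have c2 : chain s n.+2 f g by exists f.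
    case/chain_front: c2 => y0 [Pfy cy].
    have e := Pb_fun vs Pfy Pfg; subst y0.
    by move: gn; rewrite (chain_S cy).
  have fS' : f \notin map snd s' by rewrite memS' (negbTE fg) eqxx.
  have PT' : forall y k, y != f -> y != g -> Pb s' y k = Pb s y k.
    by move=> y0 k; apply: PT.
  have ch' := chain_transfer vs Pfg gn PT' ch fg.
  have nP' : ~~ Pb s' h m by rewrite PT.
  have adj : exists x y, [/\ x != y, x \in m, y \in m, x \in h & y \in h].
    by exists x, y.
  case/andP: (IH s' f h ms' fF fS' ch' m mF mh adj nP') => mS' Pmh'.
  have mg : m != g.
    apply/eqP => e; subst m.
    case/PbP: Pmh' => c [d [st2 hF2 hg2 ch2 dh2]].
    have [ec ed] := step_uniq ms'.1 st' st2; subst c d.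
    have e := other_uniq gF ag bg ab hF2 fF hg2 fg ch2 dh2 af bf.
    by rewrite e eqxx in hf.
  move: mS'; rewrite memS' (negbTE mg) orFb => /andP [mf mS].
  by rewrite mS -(PT _ _ mf mg) Pmh'.
Qed.


Lemma cross (e : rel {set T}) (A : pred {set T}) x y :
  connect e x y -> A x -> ~~ A y -> exists u v, [/\ A u, ~~ A v & e u v].
Proof.
case/connectP => p; elim: p x => [|z p IH] x /=.
  by move=> _ -> ->.
case/andP => exz pz yl ax nay.
case: (boolP (A z)) => az; first exact: IH pz yl az nay.
by exists x, z.
Qed.

Lemma valid_bound s : valid s -> size s <= #|F|.
Proof.
case/and3P => _ u al; rewrite -(size_map snd) cardE.
apply: uniq_leq_size u _ => h /mapP [x xs ->]; rewrite mem_enum.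
exact: (allP al).
Qed.

Lemma ex_max : (exists s, valid s) -> exists s, maxv s.
Proof.
move=> [s0 v0]; apply: NNPP => nex.
have H : forall k, exists s, valid s /\ k <= size s.
  elim => [|k [s [vs ks]]]; first by exists s0.
  have nm : ~ maxv s by move=> ms; apply: nex; exists s.
  have [s' [vs' lt]] : exists s', valid s' /\ size s < size s'.
    apply: NNPP => H; apply: nm; split => // s' vs'.
    rewrite leqNgt; apply/negP => lt; apply: H; by exists s'.
  by exists s'; split => //; apply: leq_ltn_trans ks lt.
have [s [vs ks]] := H #|F|.+1.
by have := valid_bound vs; rewrite leqNgt ks.
Qed.

Lemma final : (exists f, f \in F) -> has_facet_cycle F.
Proof.
move=> [f0 f0F].
have [a0 a0f] : exists a, a \in f0.
  by apply/card_gt0P; rewrite (tri f0F).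
have [b0 b0f] : exists b, b \in f0 :\ a0.
  by apply/card_gt0P; move: (tri f0F); rewrite (cardsD1 a0) a0f add1n => [[->]].
move: b0f; rewrite !inE => /andP [ba b0f].
have ab0 : a0 != b0 by rewrite eq_sym.
have [g0 [g0F g0f a0g b0g]] := other_ex f0F a0f b0f ab0.
have v0 : valid [:: (a0, f0); (b0, g0)].
  apply: valid_3 => //.
  + by rewrite /fc_rel a0f b0f ab0.
  + by rewrite /fc_rel b0g a0g ba.
  + have H : f0 \notin [:: g0] by rewrite inE eq_sym.
    exact: H.
  + have H : all (fun x => x.2 \in F) [:: (b0, g0)] by rewrite /= g0F.
    exact: H.
have [s ms] : exists s, maxv s by apply: ex_max; exists [:: (a0, f0); (b0, g0)].
have vs := ms.1.
have us := valid_uniq vs.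
case/and3P: (vs) => cy un al.
have SF h : h \in map snd s -> h \in F.
  by case/mapP => x xs ->; apply: (allP al).
case: (boolP [exists h in F, h \notin map snd s]) => [/exists_inP [g gF gn] | nall]; last first.
  exists s; split => //.
  apply: uniq_perm => //; first exact: enum_uniq.
  move=> h; rewrite mem_enum; apply/idP/idP; first exact: SF.
  move=> hF; apply/negPn/negP => hn; move/negP: nall; apply.
  by apply/exists_inP; exists h.
have sz : 2 <= size s by apply: ms.2 v0.
pose x0 := nth (a0, f0) s 0.
have x0s : x0 \in s by apply: mem_nth; apply: leq_trans sz.
have x0S : x0.2 \in map snd s by apply: map_f.
have [u [v [uS vS uv]]] := cross (A := fun h => h \in map snd s) (conn (SF _ x0S) gF) x0S gn.
case/and3P: uv => uF vF /cards2P [x [y [xy Exy]]].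
have xu : x \in u :&: v by rewrite Exy !inE eqxx.
have yu : y \in u :&: v by rewrite Exy !inE eqxx orbT.
move: xu yu; rewrite !inE => /andP [xu xv] /andP [yu yv].
have [c [d st]] := step_ex uS.
have [_ cu du cd] := step_props vs st.
have [z [zu zc zd hz]] := third uF cu du cd.
have vu : v != u by apply/eqP => e; move: vS; rewrite e uS.
have Puv : Pb s u v.
  case/orP: (case_adj hz xy xv yv xu yu) => [/andP [cv dv] | /andP [zv cdv]].
    by apply/PbP; exists c, d; split.
  by move: vS; rewrite (insA ms st zu zc zd vF zv cdv).
pose B := [set h | (h != v) && connect (Pb s) h v].
pose pf m := odflt m [pick k | Pb s m k].
have pfE m k : Pb s m k -> pf m = k.
  move=> P; rewrite /pf; case: pickP => [k' Pk' | /(_ k)]; last by rewrite P.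
  by rewrite /= (Pb_fun vs Pk' P).
have inB h : h \in B -> (exists n, chain s n.+1 h v) /\ connect (Pb s) h v.
  rewrite inE => /andP [hv cn]; split => //.
  case/connectP: cn => p pp hl.
  case: p pp hl => [|w p] pp hl; first by rewrite hl eqxx in hv.
  by exists (size p); have := chain_path pp; rewrite -hl.
have nb h : h \in B -> exists m1 m2,
    [/\ m1 != m2, m1 \in B, m2 \in B, pf m1 = h & pf m2 = h].
  move=> hB; have [[n ch] hcn] := inB h hB.
  have hS := chain_S ch.
  have [c1 [d1 st1]] := step_ex hS.
  have [hF ch1 dh1 cd1] := step_props vs st1.
  have [z1 [zh1 zc1 zd1 hz1]] := third hF ch1 dh1 cd1.
  have hsub k : k \in F -> c1 \in k -> d1 \in k -> z1 \in k -> h = k.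
    move=> kF ck dk zk; apply: eq_facet hF kF _.
    by apply/subsetP => w /hz1 /or3P [] /eqP ->.
  have notP k : k \in F -> k != h -> z1 \in k -> (c1 \in k) || (d1 \in k) -> ~~ Pb s h k.
    move=> kF kh zk cdk; apply/negP => /PbP [c' [d' [st' _ _ c'k d'k]]].
    have [? ?] := step_uniq vs st1 st'; subst c' d'.
    by move: kh; rewrite (hsub k kF c'k d'k zk) eqxx.
  have cz1 : c1 != z1 by rewrite eq_sym.
  have dz1 : d1 != z1 by rewrite eq_sym.
  have [m1 [m1F m1h cm1 zm1]] := other_ex hF ch1 zh1 cz1.
  have [m2 [m2F m2h dm2 zm2]] := other_ex hF dh1 zh1 dz1.
  have K k : k \in F -> k != h -> z1 \in k -> (c1 \in k) || (d1 \in k) ->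
      k \in B /\ pf k = h.
    move=> kF kh zk cdk.
    have adj : exists x y, [/\ x != y, x \in k, y \in k, x \in h & y \in h].
      case/orP: cdk => [ck | dk].
        by exists c1, z1; split => //; rewrite eq_sym.
      by exists d1, z1; split => //; rewrite eq_sym.
    case/andP: (key ms vF vS ch kF kh adj (notP k kF kh zk cdk)) => kS Pkh.
    split; last exact: pfE.
    rewrite inE; apply/andP; split.
      by apply/eqP => e; move: vS; rewrite -e kS.
    exact: connect_trans (connect1 Pkh) hcn.
  have [m1B pm1] : m1 \in B /\ pf m1 = h by apply: K => //; rewrite cm1.
  have [m2B pm2] : m2 \in B /\ pf m2 = h by apply: K => //; rewrite dm2 orbT.
  exists m1, m2; split => //.
  apply/eqP => e; subst m2.
  by move: m1h; rewrite (hsub m1 m1F cm1 dm2 zm1) eqxx.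
pose B' := [set m in B | pf m \in B].
have inB' m : (m \in B') = (m \in B) && (pf m \in B) by rewrite inE.
have uB : u \in B.
  rewrite inE; apply/andP; split; first by rewrite eq_sym.
  exact: connect1 Puv.
clearbody B'.
have cB' : #|B'| <= #|B|.
  by apply: subset_leq_card; apply/subsetP => m; rewrite inB' => /andP [].
have sumE : #|B'| = \sum_(h in B) #|[set m in B' | pf m == h]|.
  rewrite -sum1_card (partition_big pf (mem B)) /=.
    apply: eq_bigr => h _; rewrite -sum1_card.
    by apply: eq_bigl => m; rewrite inE.
  by move=> m; rewrite inB' => /andP [].
have lb : \sum_(h in B) 2 <= \sum_(h in B) #|[set m in B' | pf m == h]|.
  apply: leq_sum => h hB.
  have [m1 [m2 [m12 m1B m2B p1 p2]]] := nb h hB.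
  have sub : [set m1; m2] \subset [set m in B' | pf m == h].
    apply/subsetP => m; rewrite !inE => /orP [] /eqP ->; rewrite inB'.
      by rewrite p1 m1B hB eqxx.
    by rewrite p2 m2B hB eqxx.
  have c2 : #|[set m1; m2]| = 2 by rewrite cards2 m12.
  by rewrite -c2 subset_leq_card.
rewrite sum_nat_const -sumE in lb.
have := leq_trans lb cB'.
have Bpos : 0 < #|B| by apply/card_gt0P; exists u.
by rewrite leqNgt ltn_Pmulr.
Qed.

End Proofs.

Theorem theorem3 (T : finType) (F : {set {set T}}) :
  simplicial_sphere F -> has_facet_cycle F.
Proof.
case => [[tri cov] edge2 _ conn euler].
apply: (final tri edge2 conn).
case: (set_0Vmem F) => [F0 | [f fF]]; last by exists f.
exfalso.
have T0 : #|T| = 0.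
  apply: eq_card0 => v; have [f fF _] := cov v.
  by move: fF; rewrite F0 inE.
move: euler; rewrite T0 F0 cards0 addn2 => /eqP.
by rewrite eqE.
Qed.
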